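(* Let $(A,\mu,\alpha,\beta)$ be a BiHom-associative algebra and $r=\sum_i x_i\otimes y_i\in A\otimes A$ with $(\alpha\otimes\alpha)(r)=r=(\beta\otimes\beta)(r)$, and suppose $r$ is a solution of the associative BiHom-Yang-Baxter equation. Define $R:A\to A$ by $R(a)=\sum_i\alpha\beta^3(x_i)\,(a\,\alpha^3(y_i))$ (which equals $\sum_i(\beta^3(x_i)\,a)\,\alpha^3\beta(y_i)$). Then $R$ commutes with $\alpha$ and $\beta$ and satisfies $R(\alpha\beta(a))R(\alpha\beta(b))=R\big(\alpha\beta(a)R(b)+R(a)\alpha\beta(b)\big)$ for all $a,b\in A$, i.e. $R$ is an $\alpha\beta$-Rota-Baxter operator.
   Context: A BiHom-associative algebra $(A,\mu,\alpha,\beta)$: linear space with bilinear $\mu(x\otimes y)=xy$ and linear maps $\alpha,\beta$ with $\alpha\beta=\beta\alpha$, both multiplicative, and $\alpha(x)(yz)=(xy)\beta(z)$ for all $x,y,z$. For $r=\sum_i x_i\otimes y_i$ with $(\alpha\otimes\alpha)(r)=r=(\beta\otimes\beta)(r)$, $r$ is a solution of the associative BiHom-Yang-Baxter equation if $\sum_{i,j}\alpha(x_i)\otimes y_ix_j\otimes\beta(y_j)=\sum_{i,j}x_ix_j\otimes\beta(y_j)\otimes\beta(y_i)+\sum_{i,j}\alpha(x_i)\otimes\alpha(x_j)\otimes y_jy_i$ in $A\otimes A\otimes A$. *)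

(* Defs.v *)
From HB Require Import structures.
From mathcomp Require Import all_boot all_order all_algebra.
Set Implicit Arguments. Unset Strict Implicit. Unset Printing Implicit Defensive.
Import GRing.Theory.
Local Open Scope ring_scope.

Definition is_linear (K : fieldType) (A V : lmodType K) (f : A -> V) : Prop :=
  forall (c : K) (x y : A), f (c *: x + y) = c *: f x + f y.

Definition is_bilinear (K : fieldType) (A V : lmodType K) (f : A -> A -> V) : Prop :=
  (forall (c : K) x x' y, f (c *: x + x') y = c *: f x y + f x' y) /\
  (forall (c : K) x y y', f x (c *: y + y') = c *: f x y + f x y').

Definition is_trilinear (K : fieldType) (A V : lmodType K) (f : A -> A -> A -> V) : Prop :=
  (forall (c : K) x x' y z, f (c *: x + x') y z = c *: f x y z + f x' y z) /\
  (forall (c : K) x y y' z, f x (c *: y + y') z = c *: f x y z + f x y' z) /\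
  (forall (c : K) x y z z', f x y (c *: z + z') = c *: f x y z + f x y z').

Definition BiHomAssoc (K : fieldType) (A : lmodType K)
    (mu : A -> A -> A) (alpha beta : A -> A) : Prop :=
  is_bilinear mu /\ is_linear alpha /\ is_linear beta /\
  (forall x, alpha (beta x) = beta (alpha x)) /\
  (forall x y, alpha (mu x y) = mu (alpha x) (alpha y)) /\
  (forall x y, beta (mu x y) = mu (beta x) (beta y)) /\
  (forall x y z, mu (alpha x) (mu y z) = mu (mu x y) (beta z)).

(* Elements of A (x) A are represented by finite lists of pairs
   r = [:: (x_i, y_i)] meaning  sum_i x_i (x) y_i.
   Equalities in A (x) A, resp. A (x) A (x) A, are expressed through the
   universal property of the tensor product: two tensors are equal iff every
   bilinear (resp. trilinear) map into every K-vector space V agrees on them. *)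

Definition tensor2_invariant (K : fieldType) (A : lmodType K) (f : A -> A)
    (r : seq (A * A)) : Prop :=
  forall (V : lmodType K) (g : A -> A -> V), is_bilinear g ->
    \sum_(p <- r) g (f p.1) (f p.2) = \sum_(p <- r) g p.1 p.2.

Definition BiHomAYBE (K : fieldType) (A : lmodType K)
    (mu : A -> A -> A) (alpha beta : A -> A) (r : seq (A * A)) : Prop :=
  forall (V : lmodType K) (g : A -> A -> A -> V), is_trilinear g ->
    \sum_(p <- r) \sum_(q <- r) g (alpha p.1) (mu p.2 q.1) (beta q.2)
    = \sum_(p <- r) \sum_(q <- r) g (mu p.1 q.1) (beta q.2) (beta p.2)
      + \sum_(p <- r) \sum_(q <- r) g (alpha p.1) (alpha q.1) (mu q.2 p.2).

Definition RBop (K : fieldType) (A : lmodType K)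
    (mu : A -> A -> A) (alpha beta : A -> A) (r : seq (A * A)) (a : A) : A :=
  \sum_(p <- r) mu (alpha (iter 3 beta p.1)) (mu a (iter 3 alpha p.2)).

(* Main.v *)
Require Import Defs.
From HB Require Import structures.
From mathcomp Require Import all_boot all_order all_algebra.
Import GRing.Theory.
Local Open Scope ring_scope.

Set Implicit Arguments. Unset Strict Implicit.

Lemma L_id (K : fieldType) (A : lmodType K) : is_linear (fun u : A => u).
Proof. by []. Qed.

Lemma dbl0 (K : fieldType) (A : lmodType K) (x : A) : x = x + x -> x = 0.
Proof. by move=> e; apply: (addrI x); rewrite addr0 -e. Qed.

Lemma bil_l (K : fieldType) (A : lmodType K) (mu : A -> A -> A) :
  is_bilinear mu -> forall x x' y, mu (x + x') y = mu x y + mu x' y.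
Proof. by move=> [h _] x x' y; have := h 1 x x' y; rewrite !scale1r. Qed.
Lemma bil_r (K : fieldType) (A : lmodType K) (mu : A -> A -> A) :
  is_bilinear mu -> forall x y y', mu x (y + y') = mu x y + mu x y'.
Proof. by move=> [_ h] x y y'; have := h 1 x y y'; rewrite !scale1r. Qed.
Lemma bil_0l (K : fieldType) (A : lmodType K) (mu : A -> A -> A) :
  is_bilinear mu -> forall y, mu 0 y = 0.
Proof. move=> h y; have := bil_l h 0 0 y; rewrite addr0 => e.
exact: dbl0 e. Qed.
Lemma bil_0r (K : fieldType) (A : lmodType K) (mu : A -> A -> A) :
  is_bilinear mu -> forall y, mu y 0 = 0.
Proof. move=> h y; have := bil_r h y 0 0; rewrite addr0 => e.
exact: dbl0 e. Qed.
Lemma lin_add (K : fieldType) (A : lmodType K) (f : A -> A) :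
  is_linear f -> forall x y, f (x + y) = f x + f y.
Proof. by move=> h x y; have := h 1 x y; rewrite !scale1r. Qed.
Lemma lin_0 (K : fieldType) (A : lmodType K) (f : A -> A) :
  is_linear f -> f 0 = 0.
Proof. move=> h; have := lin_add h 0 0; rewrite addr0 => e.
exact: dbl0 e. Qed.
Lemma lin_sum (K : fieldType) (A : lmodType K) (f : A -> A) (I : Type) (s : seq I) (F : I -> A) :
  is_linear f -> f (\sum_(i <- s) F i) = \sum_(i <- s) f (F i).
Proof. move=> h; exact: (big_morph f (lin_add h) (lin_0 h)). Qed.

Lemma L_mul_l (K : fieldType) (A : lmodType K) (mu : A -> A -> A) :
  is_bilinear mu -> forall (F : A -> A) y, is_linear F -> is_linear (fun u => mu (F u) y).
Proof. by move=> [h _] F y hF c x x'; rewrite hF h. Qed.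
Lemma L_mul_r (K : fieldType) (A : lmodType K) (mu : A -> A -> A) :
  is_bilinear mu -> forall x (F : A -> A), is_linear F -> is_linear (fun u => mu x (F u)).
Proof. by move=> [_ h] x F hF c y y'; rewrite hF h. Qed.
Lemma L_comp (K : fieldType) (A : lmodType K) (f : A -> A) :
  is_linear f -> forall (F : A -> A), is_linear F -> is_linear (fun u => f (F u)).
Proof. by move=> h F hF c x x'; rewrite hF h. Qed.
Lemma L_iter (K : fieldType) (A : lmodType K) (f : A -> A) n :
  is_linear f -> forall (F : A -> A), is_linear F -> is_linear (fun u => iter n f (F u)).
Proof. move=> h F hF; elim: n => [|n IH] //= c x x'; by rewrite IH h. Qed.
Lemma L_sum (K : fieldType) (A : lmodType K) (I : Type) (s : seq I) (F : A -> I -> A) :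
  (forall q, is_linear (fun u => F u q)) -> is_linear (fun u => \sum_(q <- s) F u q).
Proof.
move=> h c x y; elim: s => [|q s IH]; first by rewrite !big_nil scaler0 addr0.
by rewrite !big_cons IH h scalerDr addrACA.
Qed.
Lemma bil_of (K : fieldType) (A : lmodType K) (g : A -> A -> A) :
  (forall y, is_linear (fun x => g x y)) -> (forall x, is_linear (fun y => g x y)) -> is_bilinear g.
Proof. by move=> h1 h2; split=> c *; [apply: h1 | apply: h2]. Qed.
Lemma tril_of (K : fieldType) (A : lmodType K) (g : A -> A -> A -> A) :
  (forall y z, is_linear (fun x => g x y z)) -> (forall x z, is_linear (fun y => g x y z)) ->
  (forall x y, is_linear (fun z => g x y z)) -> is_trilinear g.
Proof. by move=> h1 h2 h3; split; [|split] => c *; [apply: h1 | apply: h2 | apply: h3]. Qed.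

Ltac lin bil la lb :=
  repeat first [ apply: L_id
    | apply: (L_sum) => ?
    | apply: (L_mul_l bil)
    | apply: (L_mul_r bil)
    | apply: (L_comp la)
    | apply: (L_comp lb)
    | apply: (L_iter _ la)
    | apply: (L_iter _ lb) ].


Lemma bil_comp (K : fieldType) (A : lmodType K) (g : A -> A -> A) (f : A -> A) :
  is_bilinear g -> is_linear f -> is_bilinear (fun u v => g (f u) (f v)).
Proof. by move=> [h1 h2] hf; split=> c *; rewrite hf ?h1 ?h2. Qed.

Lemma iter_lin (K : fieldType) (A : lmodType K) (f : A -> A) k :
  is_linear f -> is_linear (iter k f).
Proof. by move=> hf; elim: k => [|k IH] // c x y; rewrite !iterS IH hf. Qed.

Lemma shift_gen (K : fieldType) (A : lmodType K) (f : A -> A) (r : seq (A * A)) :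
  is_linear f -> tensor2_invariant f r -> forall k (g : A -> A -> A), is_bilinear g ->
  \sum_(p <- r) g p.1 p.2 = \sum_(p <- r) g (iter k f p.1) (iter k f p.2).
Proof.
move=> hf inv; elim=> [|k IH] g hg //.
rewrite [LHS](IH g hg); symmetry.
under eq_bigr => p _ do rewrite !iterSr.
rewrite (inv A (fun u v => g (iter k f u) (iter k f v))) //.
exact: bil_comp hg (iter_lin k hf).
Qed.

Lemma shift_pair (K : fieldType) (A : lmodType K) (alpha beta : A -> A) (r : seq (A * A)) :
  is_linear alpha -> is_linear beta -> tensor2_invariant alpha r -> tensor2_invariant beta r ->
  forall m n (h : A * A -> A), is_bilinear (fun u v => h (u, v)) ->
  \sum_(p <- r) h p = \sum_(p <- r) h (iter n beta (iter m alpha p.1), iter n beta (iter m alpha p.2)).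
Proof.
move=> la lb ia ib m n h hh.
transitivity (\sum_(p <- r) (fun u v => h (u, v)) p.1 p.2).
  by apply: eq_bigr => -[].
rewrite (shift_gen lb ib n hh).
by rewrite (shift_gen la ia m (bil_comp hh (iter_lin n lb))).
Qed.

Lemma mu_suml (K : fieldType) (A : lmodType K) (mu : A -> A -> A) (I : Type) (s : seq I) (F : I -> A) y :
  is_bilinear mu -> mu (\sum_(i <- s) F i) y = \sum_(i <- s) mu (F i) y.
Proof. move=> h; exact: (lin_sum _ _ (L_mul_l h y (@L_id K A))). Qed.
Lemma mu_sumr (K : fieldType) (A : lmodType K) (mu : A -> A -> A) (I : Type) (s : seq I) (F : I -> A) y :
  is_bilinear mu -> mu y (\sum_(i <- s) F i) = \sum_(i <- s) mu y (F i).
Proof. move=> h; exact: (lin_sum _ _ (L_mul_r h y (@L_id K A))). Qed.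

Ltac bl b l1 l2 := apply: bil_of => [?|?]; rewrite /=; lin b l1 l2.
Ltac nrm am bm ba := rewrite /=; repeat (first [rewrite am | rewrite bm | rewrite ba]).
Ltac nrmh am bm ba h := rewrite /= in h; repeat (first [rewrite am in h | rewrite bm in h | rewrite ba in h]).

Ltac stF am bm ba e := let h := fresh in have h := e; nrmh am bm ba h; rewrite h; clear h.
Ltac stR am bm ba e := let h := fresh in have h := e; nrmh am bm ba h; rewrite -h; clear h.

Theorem mainTheorem9 (K : fieldType) (A : lmodType K)
    (mu : A -> A -> A) (alpha beta : A -> A) (r : seq (A * A)) :
  BiHomAssoc mu alpha beta ->
  tensor2_invariant alpha r ->
  tensor2_invariant beta r ->
  BiHomAYBE mu alpha beta r ->
  let R := RBop mu alpha beta r in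
  (forall a, R a = \sum_(p <- r) mu (mu (iter 3 beta p.1) a) (iter 3 alpha (beta p.2))) /\
  (forall a, R (alpha a) = alpha (R a)) /\
  (forall a, R (beta a) = beta (R a)) /\
  (forall a b, mu (R (alpha (beta a))) (R (alpha (beta b)))
               = R (mu (alpha (beta a)) (R b) + mu (R a) (alpha (beta b)))).
Proof.
move=> [bil [la [lb [ab [am [bm asc]]]]]] ia ib aybe R.
have ba : forall x, beta (alpha x) = alpha (beta x) by move=> x; rewrite ab.
have shA : forall g : A -> A -> A, is_bilinear g ->
   \sum_(p <- r) g p.1 p.2 = \sum_(p <- r) g (alpha p.1) (alpha p.2).
  by move=> g hg; rewrite ia.
have shB : forall g : A -> A -> A, is_bilinear g ->
   \sum_(p <- r) g p.1 p.2 = \sum_(p <- r) g (beta p.1) (beta p.2).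
  by move=> g hg; rewrite ib.
split.
  move=> a; rewrite /R /RBop; apply: eq_bigr => p _ /=.
  by rewrite asc -!ba.
split.
  move=> a; rewrite /R /RBop (lin_sum _ _ la).
  rewrite (shA (fun u v => mu (alpha (iter 3 beta u)) (mu (alpha a) (iter 3 alpha v)))); last first.
    by apply: bil_of => [y|x]; lin bil la lb.
  by apply: eq_bigr => p _ /=; rewrite !am -!ba.
split.
  move=> a; rewrite /R /RBop (lin_sum _ _ lb).
  rewrite (shB (fun u v => mu (alpha (iter 3 beta u)) (mu (beta a) (iter 3 alpha v)))); last first.
    by apply: bil_of => [y|x]; lin bil la lb.
  by apply: eq_bigr => p _ /=; rewrite !bm -!ba.
move=> a b.
pose G := fun u m w => mu (mu (mu (iter 4 beta u) (alpha (beta a))) (iter 3 alpha (iter 2 beta m)))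
   (mu (alpha (beta (beta b))) (iter 5 alpha w)).
have stepA : mu (R (alpha (beta a))) (R (alpha (beta b))) =
   \sum_(p<-r) \sum_(q<-r) G (alpha p.1) (mu p.2 q.1) (beta q.2).
  rewrite /R /RBop mu_suml //.
  under eq_bigr => p _ do rewrite mu_sumr //.
  rewrite [LHS](shift_pair la lb ia ib 1 1); last by bl bil la lb.
  apply: eq_bigr => p _.
  rewrite [LHS](shift_pair la lb ia ib 2 0); last by bl bil la lb.
  apply: eq_bigr => q _.
  rewrite /G; nrm am bm ba.
  stF am bm ba (asc (iter 1 alpha (iter 4 beta p.1)) (alpha (beta a)) (iter 4 alpha (beta p.2))).
  stF am bm ba (asc (mu (iter 4 beta p.1) (beta a)) (iter 3 alpha (iter 2 beta p.2)) (iter 3 alpha (iter 2 beta q.1))).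
  stR am bm ba (asc (mu (mu (iter 4 beta p.1) (beta a)) (iter 3 alpha (iter 2 beta p.2))) (iter 3 alpha (iter 3 beta q.1)) (mu (alpha (beta b)) (iter 5 alpha q.2))).
  done.
have stepB : R (mu (alpha (beta a)) (R b)) =
   \sum_(p<-r) \sum_(q<-r) G (alpha p.1) (alpha q.1) (mu q.2 p.2).
  rewrite /G /R /RBop.
  under eq_bigr => p _ do rewrite mu_sumr // mu_suml // mu_sumr //.
  rewrite [LHS](shift_pair la lb ia ib 2 1); last by bl bil la lb.
  apply: eq_bigr => p _.
  rewrite [LHS](shift_pair la lb ia ib 2 0); last by bl bil la lb.
  rewrite [RHS](shift_pair la lb ia ib 0 2); last by bl bil la lb.
  apply: eq_bigr => q _.
  nrm am bm ba.
  stF am bm ba (asc (iter 2 alpha (iter 4 beta p.1)) (mu (alpha (beta a)) (mu (iter 3 alpha (iter 3 beta q.1)) (mu b (iter 5 alpha q.2)))) (iter 5 alpha (beta p.2))).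
  stF am bm ba (asc (alpha (iter 4 beta p.1)) (alpha (beta a)) (mu (iter 3 alpha (iter 3 beta q.1)) (mu b (iter 5 alpha q.2)))).
  stF am bm ba (asc (mu (iter 4 beta p.1) (beta a)) (iter 3 alpha (iter 4 beta q.1)) (mu (beta b) (iter 5 alpha (beta q.2)))).
  stR am bm ba (asc (mu (mu (iter 4 beta p.1) (beta a)) (iter 3 alpha (iter 4 beta q.1))) (mu (beta (beta b)) (iter 5 alpha (iter 2 beta q.2))) (iter 5 alpha (beta p.2))).
  stR am bm ba (asc (beta (beta b)) (iter 5 alpha (iter 2 beta q.2)) (iter 5 alpha p.2)).
  done.
have stepC : R (mu (R a) (alpha (beta b))) =
   \sum_(p<-r) \sum_(q<-r) G (mu p.1 q.1) (beta q.2) (beta p.2).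
  rewrite /G /R /RBop.
  under eq_bigr => p _ do rewrite mu_suml // mu_suml // mu_sumr //.
  rewrite [LHS](shift_pair la lb ia ib 2 1); last by bl bil la lb.
  apply: eq_bigr => p _.
  rewrite [LHS](shift_pair la lb ia ib 0 1); last by bl bil la lb.
  rewrite [RHS](shift_pair la lb ia ib 1 0); last by bl bil la lb.
  apply: eq_bigr => q _.
  nrm am bm ba.
  stF am bm ba (asc (iter 2 alpha (iter 4 beta p.1)) (mu (mu (alpha (iter 4 beta q.1)) (mu a (iter 3 alpha (beta q.2)))) (alpha (beta b))) (iter 5 alpha (beta p.2))).
  stF am bm ba (asc (alpha (iter 4 beta p.1)) (mu (alpha (iter 4 beta q.1)) (mu a (iter 3 alpha (beta q.2)))) (alpha (beta b))).
  stR am bm ba (asc (mu (alpha (iter 4 beta p.1)) (mu (alpha (iter 4 beta q.1)) (mu a (iter 3 alpha (beta q.2))))) (alpha (iter 2 beta b)) (iter 5 alpha (beta p.2))).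
  stF am bm ba (asc (alpha (iter 4 beta p.1)) (iter 2 alpha (iter 4 beta q.1)) (mu (alpha a) (iter 4 alpha (beta q.2)))).
  stR am bm ba (asc (mu (iter 4 beta p.1) (alpha (iter 4 beta q.1))) (alpha (beta a)) (iter 4 alpha (iter 2 beta q.2))).
  done.
have lR : is_linear R by rewrite /R /RBop; lin bil la lb.
have tG : is_trilinear G by apply: tril_of => *; rewrite /G /=; lin bil la lb.
by rewrite stepA (lin_add lR) stepB stepC (aybe A G tG) addrC.
Qed.
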